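(* Let $0.8<t<1$, $P=(0,t)$, $Q=(0,-t)$, $R=\left(\frac{t-1}{t+1},0\right)$, and let $A_1=(1,0)$, $A_2=\left(\frac{t^2-1}{t^2+1},\frac{2t}{t^2+1}\right)$, $A_3=(0,-1)$, $A_4=(0,1)$, $A_5=\left(\frac{t^2-1}{t^2+1},-\frac{2t}{t^2+1}\right)$. If $v\in S^1$ satisfies $\psi_{\triangle PQR}^5(v)=v$, then $v=A_i$ for some $i$ with $1\leq i\leq 5$.
   Context: $D$ is the open unit disk in $\mathbb R^2$ and $S^1$ its boundary circle. For a closed convex $U\subset D$ and $v\in S^1$, $\psi_U(v)$ is the point $w\in S^1\setminus\{v\}$ such that the line $vw$ meets $U$ and $U$ lies in the closed half-plane to the left of the directed line from $v$ to $w$ (the first point counterclockwise from $v$ whose chord from $v$ is tangent to $U$); $\triangle PQR$ denotes the closed filled triangle. *)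

(* Defs.v *)
From Stdlib Require Import Reals Lra ClassicalEpsilon.
Open Scope R_scope.

Definition pt := (R * R)%type.

Definition on_S1 (v : pt) : Prop := fst v ^ 2 + snd v ^ 2 = 1.

(* cross product (w - v) x (p - v): positive iff p is strictly to the left
   of the directed line from v to w *)
Definition cross3 (v w p : pt) : R :=
  (fst w - fst v) * (snd p - snd v) - (snd w - snd v) * (fst p - fst v).

Definition psi_spec (U : pt -> Prop) (v w : pt) : Prop :=
  on_S1 w /\ w <> v /\
  (exists p, U p /\ cross3 v w p = 0) /\
  (forall p, U p -> 0 <= cross3 v w p).       (* U in the closed left half-plane *)

(* psi_U(v): the (unique, when it exists) point w with psi_spec U v w *)
Definition psi (U : pt -> Prop) (v : pt) : pt :=
  epsilon (inhabits (0, 0)) (psi_spec U v).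

Definition filled_triangle (P Q R0 : pt) : pt -> Prop := fun x =>
  exists a b c, 0 <= a /\ 0 <= b /\ 0 <= c /\ a + b + c = 1 /\
    fst x = a * fst P + b * fst Q + c * fst R0 /\
    snd x = a * snd P + b * snd Q + c * snd R0.

(* Main.v *)
Require Import Defs.
From Stdlib Require Import Reals Lra Psatz ClassicalEpsilon.
Open Scope R_scope.

Definition pv (s : R) : pt := ((s^2-1)/(s^2+1), 2*s/(s^2+1)).

Lemma pos1 s : s * s + 1 <> 0.
Proof. nra. Qed.
Lemma pos1' s : s^2 + 1 <> 0.
Proof. nra. Qed.

Lemma pv_S1 s : on_S1 (pv s).
Proof. unfold on_S1, pv; simpl. field. apply pos1. Qed.

Lemma pv_s s : snd (pv s) / (1 - fst (pv s)) = s.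
Proof. unfold pv; simpl. 
 replace (1 - (s * (s * 1) - 1) / (s * (s * 1) + 1)) with (2 / (s*s+1)).
 2:{ field. apply pos1. }
 field. apply pos1. Qed.

Lemma pv_inj s1 s2 : pv s1 = pv s2 -> s1 = s2.
Proof. intro H. rewrite <- (pv_s s1), <- (pv_s s2), H. reflexivity. Qed.

Lemma pv_fst s : fst (pv s) <> 1.
Proof. unfold pv; simpl. intro H. 
  assert (E: (s * (s * 1) - 1) = 1 * (s * (s * 1) + 1)).
  { rewrite <- H. field. apply pos1. } lra. Qed.

Lemma S1_pv v : on_S1 v -> fst v <> 1 -> v = pv (snd v / (1 - fst v)).
Proof. destruct v as [x y]; unfold on_S1, pv; simpl. intros H1 H2.
  assert (1 - x <> 0) by lra.
  assert (Hd : (y/(1-x))*((y/(1-x))*1) + 1 = 2/(1-x)).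
  { field_simplify_eq; auto. nra. }
  rewrite Hd. f_equal; field_simplify_eq; auto; try nra.
Qed.

Lemma cross_pv s s' a b : cross3 (pv s) (pv s') (a,b) =
  2*(s'-s)*(s*s'*(a-1) + b*(s+s') - (a+1)) / ((s^2+1)*(s'^2+1)).
Proof. unfold cross3, pv; simpl. field. split; apply pos1. Qed.

Lemma cross_A1 s a b : cross3 (pv s) (1,0) (a,b) = 2*(s*(a-1)+b)/(s^2+1).
Proof. unfold cross3, pv; simpl. field. apply pos1. Qed.

Lemma cross_aff v w P Q R0 a b c x :
  a + b + c = 1 ->
  fst x = a * fst P + b * fst Q + c * fst R0 ->
  snd x = a * snd P + b * snd Q + c * snd R0 ->
  cross3 v w x = a * cross3 v w P + b * cross3 v w Q + c * cross3 v w R0.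
Proof. intros Hs H1 H2. unfold cross3. rewrite H1, H2.
  replace c with (1 - a - b) by lra. ring. Qed.

Lemma in_tri_P P Q R0 : filled_triangle P Q R0 P.
Proof. exists 1, 0, 0. repeat split; try lra; ring. Qed.
Lemma in_tri_Q P Q R0 : filled_triangle P Q R0 Q.
Proof. exists 0, 1, 0. repeat split; try lra; ring. Qed.
Lemma in_tri_R P Q R0 : filled_triangle P Q R0 R0.
Proof. exists 0, 0, 1. repeat split; try lra; ring. Qed.

Lemma spec_tri_fwd P Q R0 v w : psi_spec (filled_triangle P Q R0) v w ->
  on_S1 w /\ w <> v /\ 0 <= cross3 v w P /\ 0 <= cross3 v w Q /\ 0 <= cross3 v w R0 /\
  (cross3 v w P = 0 \/ cross3 v w Q = 0 \/ cross3 v w R0 = 0).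
Proof.
  intros [H1 [H2 [[p [Hp Hz]] H4]]].
  pose proof (H4 _ (in_tri_P P Q R0)) as HP.
  pose proof (H4 _ (in_tri_Q P Q R0)) as HQ.
  pose proof (H4 _ (in_tri_R P Q R0)) as HR.
  repeat split; auto.
  destruct Hp as [a [b [c [Ha [Hb [Hc [Hs [E1 E2]]]]]]]].
  rewrite (cross_aff v w P Q R0 a b c p Hs E1 E2) in Hz.
  destruct (Req_dec (cross3 v w P) 0); auto. right.
  destruct (Req_dec (cross3 v w Q) 0); auto. right.
  assert (a = 0) by nra. assert (b = 0) by nra. subst. nra.
Qed.

Lemma spec_tri_bwd P Q R0 v w :
  on_S1 w -> w <> v -> 0 <= cross3 v w P -> 0 <= cross3 v w Q -> 0 <= cross3 v w R0 ->
  (cross3 v w P = 0 \/ cross3 v w Q = 0 \/ cross3 v w R0 = 0) ->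
  psi_spec (filled_triangle P Q R0) v w.
Proof.
  intros H1 H2 HP HQ HR Hz. split; auto. split; auto. split.
  - destruct Hz as [Hz|[Hz|Hz]]; eexists; split; try eassumption;
    first [apply in_tri_P | apply in_tri_Q | apply in_tri_R].
  - intros p [a [b [c [Ha [Hb [Hc [Hs [E1 E2]]]]]]]].
    rewrite (cross_aff v w P Q R0 a b c p Hs E1 E2). nra.
Qed.

Lemma psi_eq U v w : psi_spec U v w -> (forall w', psi_spec U v w' -> w' = w) -> psi U v = w.
Proof. intros H Hu. apply Hu. unfold psi. apply epsilon_spec. exists w; exact H. Qed.

Definition Ut (t : R) := filled_triangle (0,t) (0,-t) ((t-1)/(t+1),0).
Definition LP t s s' := -s*s' + t*(s+s') - 1.
Definition LQ t s s' := -s*s' - t*(s+s') - 1.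
Definition LR t s s' := s*s' + t.
Definition Cond t s s' := s' <> s /\ 0 <= (s'-s)*LP t s s' /\ 0 <= (s'-s)*LQ t s s' /\
  (s'-s)*LR t s s' <= 0 /\ (LP t s s' = 0 \/ LQ t s s' = 0 \/ LR t s s' = 0).

Lemma crossP t s s' : cross3 (pv s) (pv s') (0,t) = (2/((s^2+1)*(s'^2+1))) * ((s'-s)*LP t s s').
Proof. rewrite cross_pv. unfold LP. field. split; apply pos1'. Qed.
Lemma crossQ t s s' : cross3 (pv s) (pv s') (0,-t) = (2/((s^2+1)*(s'^2+1))) * ((s'-s)*LQ t s s').
Proof. rewrite cross_pv. unfold LQ. field. split; apply pos1'. Qed.
Lemma crossR t s s' : 0 < t -> cross3 (pv s) (pv s') ((t-1)/(t+1),0) =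
   - (4/((t+1)*(s^2+1)*(s'^2+1))) * ((s'-s)*LR t s s').
Proof. intro. rewrite cross_pv. unfold LR. field. repeat split; try apply pos1'; lra. Qed.

Lemma kpos t s s' : 0 < t -> 0 < 2/((s^2+1)*(s'^2+1)) /\ 0 < 4/((t+1)*(s^2+1)*(s'^2+1)).
Proof. intro. assert (0 < s^2+1) by nra. assert (0 < s'^2+1) by nra. split;
  apply Rdiv_lt_0_compat; try lra; repeat apply Rmult_lt_0_compat; lra. Qed.

Lemma spec_pv_iff t s s' : 0 < t -> psi_spec (Ut t) (pv s) (pv s') <-> Cond t s s'.
Proof.
  intro ht. destruct (kpos t s s' ht) as [k1 k2]. unfold Ut. split.
  - intro H. apply spec_tri_fwd in H.
    rewrite crossP, crossQ, (crossR t s s' ht) in H.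
    destruct H as [_ [Hne [HP [HQ [HR Hz]]]]].
    assert (Hs : s' <> s) by (intro; subst; auto).
    assert (Hs' : s' - s <> 0) by lra.
    unfold Cond. repeat split; auto; try nra.
    destruct Hz as [Hz|[Hz|Hz]]; [left|right;left|right;right].
    + apply Rmult_integral in Hz. destruct Hz as [Hz|Hz]; [lra|].
      apply Rmult_integral in Hz. destruct Hz; [lra|auto].
    + apply Rmult_integral in Hz. destruct Hz as [Hz|Hz]; [lra|].
      apply Rmult_integral in Hz. destruct Hz; [lra|auto].
    + assert (Hz' : (4 / ((t + 1) * (s ^ 2 + 1) * (s' ^ 2 + 1))) * ((s' - s) * LR t s s') = 0) by lra.
      apply Rmult_integral in Hz'. destruct Hz' as [Hz'|Hz']; [lra|].
      apply Rmult_integral in Hz'. destruct Hz'; [lra|auto].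
  - intros [Hne [HP [HQ [HR Hz]]]]. apply spec_tri_bwd.
    + apply pv_S1.
    + intro E. apply pv_inj in E. auto.
    + rewrite crossP. nra.
    + rewrite crossQ. nra.
    + rewrite crossR by auto. nra.
    + rewrite crossP, crossQ, crossR by auto.
      destruct Hz as [Hz|[Hz|Hz]]; rewrite Hz; [left|right;left|right;right]; ring.
Qed.

Lemma spec_A1 t s : 0 < t -> psi_spec (Ut t) (pv s) (1,0) -> s = -t.
Proof.
  intros ht H. unfold Ut in H. apply spec_tri_fwd in H.
  rewrite !cross_A1 in H. destruct H as [_ [_ [HP [HQ [HR Hz]]]]].
  assert (0 < s^2+1) by nra.
  assert (E : forall X, 0 <= 2*X/(s^2+1) -> 0 <= X).
  { intros X HX. apply Rmult_le_compat_r with (r := (s^2+1)/2) in HX; [|lra].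
    replace (2*X/(s^2+1)*((s^2+1)/2)) with X in HX by (field; lra). lra. }
  assert (E0 : forall X, 2*X/(s^2+1) = 0 -> X = 0).
  { intros X HX. replace X with (2*X/(s^2+1)*((s^2+1)/2)) by (field; lra). rewrite HX; ring. }
  apply E in HP. apply E in HQ. apply E in HR.
  replace ((t-1)/(t+1) - 1) with (-2/(t+1)) in HR, Hz by (field; lra).
  assert (0 < 2/(t+1)) by (apply Rdiv_lt_0_compat; lra).
  assert (Em : s * (-2/(t+1)) + 0 = -(2/(t+1)) * s) by (field; lra).
  rewrite Em in HR, Hz.
  destruct Hz as [Hz|[Hz|Hz]]; apply E0 in Hz; nra.
Qed.

Lemma psi_pv t s : 0 < t -> s <> -t -> (exists s', Cond t s s') ->
  exists s', psi (Ut t) (pv s) = pv s' /\ Cond t s s'.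
Proof.
  intros ht hs [s0 H0].
  assert (Hsp : psi_spec (Ut t) (pv s) (psi (Ut t) (pv s))).
  { unfold psi. apply epsilon_spec. exists (pv s0). apply spec_pv_iff; auto. }
  destruct (Req_dec (fst (psi (Ut t) (pv s))) 1) as [E|E].
  - exfalso. pose proof (proj1 Hsp) as HS.
    assert (E1 : psi (Ut t) (pv s) = (1,0)).
    { destruct (psi (Ut t) (pv s)) as [x y]. simpl in E. subst x.
      unfold on_S1 in HS; simpl in HS. assert (y = 0) by nra. subst y. reflexivity. }
    rewrite E1 in Hsp. apply spec_A1 in Hsp; auto.
  - exists (snd (psi (Ut t) (pv s)) / (1 - fst (psi (Ut t) (pv s)))).
    assert (Ep := S1_pv _ (proj1 Hsp) E). split; auto.
    apply spec_pv_iff; auto. rewrite <- Ep. auto.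
Qed.

Definition sP t s := (1-t*s)/(t-s).
Definition sQ t s := -(1+t*s)/(s+t).
Definition sR t s := -t/s.
Definition cP t s := t*s^2+(t-1)*s-t^2.
Definition cB t s := t*s^2+(1-t)*s-t^2.

Lemma pow2_gt_0 x : x <> 0 -> 0 < x^2.
Proof. intro H. pose proof (Rsqr_pos_lt x H). unfold Rsqr in *. simpl. lra. Qed.

Lemma div_nn X d : 0 < d -> 0 <= X / d -> 0 <= X.
Proof. intros Hd H. replace X with (X/d*d) by (field; lra). nra. Qed.
Lemma div_np X d : 0 < d -> X / d <= 0 -> X <= 0.
Proof. intros Hd H. replace X with (X/d*d) by (field; lra). nra. Qed.

Lemma Cond_cases t s s' : 0 < t < 1 -> Cond t s s' ->
  (s' = sP t s /\ 1 <= s^2 /\ 0 <= cP t s) \/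
  (s' = sQ t s /\ s^2 <= 1 /\ cB t s <= 0) \/
  (s' = sR t s /\ cP t s <= 0 /\ 0 <= cB t s).
Proof.
  intros ht HC; unfold Cond in HC; destruct HC as [Hne [HP [HQ [HR Hz]]]].
  assert (Dp : 0 < s^2 - 2*t*s + 1) by (pose proof (pow2_ge_0 (s-t)); nra).
  assert (Dq : 0 < s^2 + 2*t*s + 1) by (pose proof (pow2_ge_0 (s+t)); nra).
  assert (Dr : 0 < s^2 + t) by (pose proof (pow2_ge_0 s); nra).
  destruct Hz as [Hz|[Hz|Hz]].
  - left. assert (Hts : t - s <> 0) by (intro; assert (s = t) by lra; subst; unfold LP in Hz; nra).
    assert (E : s' = sP t s) by (unfold LP in Hz; unfold sP; field_simplify_eq; [nra| auto]).
    assert (Hd : 0 < (t-s)^2) by (apply pow2_gt_0 ; auto) .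
    subst s'. split; [reflexivity|]. split.
    + assert (E2 : (sP t s - s) * LQ t s (sP t s)
         = -2*t*(s^2 - 2*t*s + 1)*(1-s^2)/(t-s)^2) by (unfold sP, LQ; field; auto).
      rewrite E2 in HQ. apply div_nn in HQ; auto.
      assert (0 < t*(s^2 - 2*t*s + 1)) by (apply Rmult_lt_0_compat; lra). nra.
    + assert (E2 : (sP t s - s) * LR t s (sP t s)
         = -(s^2 - 2*t*s + 1)*cP t s/(t-s)^2) by (unfold sP, LR, cP; field; auto).
      rewrite E2 in HR. apply div_np in HR; auto. nra.
  - right; left. assert (Hts : s + t <> 0) by (intro; assert (s = -t) by lra; subst; unfold LQ in Hz; nra).
    assert (E : s' = sQ t s) by (unfold LQ in Hz; unfold sQ; field_simplify_eq; [nra| auto]).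
    assert (Hd : 0 < (s+t)^2) by (apply pow2_gt_0 ; auto) .
    subst s'. split; [reflexivity|]. split.
    + assert (E2 : (sQ t s - s) * LP t s (sQ t s)
         = 2*t*(s^2 + 2*t*s + 1)*(1-s^2)/(s+t)^2) by (unfold sQ, LP; field; auto).
      rewrite E2 in HP. apply div_nn in HP; auto.
      assert (0 < t*(s^2 + 2*t*s + 1)) by (apply Rmult_lt_0_compat; lra). nra.
    + assert (E2 : (sQ t s - s) * LR t s (sQ t s)
         = (s^2 + 2*t*s + 1)*cB t s/(s+t)^2) by (unfold sQ, LR, cB; field; auto).
      rewrite E2 in HR. apply div_np in HR; auto. nra.
  - right; right. assert (Hts : s <> 0) by (intro; subst; unfold LR in Hz; nra).
    assert (E : s' = sR t s) by (unfold LR in Hz; unfold sR; field_simplify_eq; [nra| auto]).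
    assert (Hd : 0 < s^2) by (apply pow2_gt_0 ; auto) .
    subst s'. split; [reflexivity|]. split.
    + assert (E2 : (sR t s - s) * LP t s (sR t s)
         = -(s^2+t)*cP t s/s^2) by (unfold sR, LP, cP; field; auto).
      rewrite E2 in HP. apply div_nn in HP; auto. nra.
    + assert (E2 : (sR t s - s) * LQ t s (sR t s)
         = (s^2+t)*cB t s/s^2) by (unfold sR, LQ, cB; field; auto).
      rewrite E2 in HQ. apply div_nn in HQ; auto. nra.
Qed.

Lemma mul_div_nn X d : 0 < d -> 0 <= X -> 0 <= X / d.
Proof. intros. apply Rmult_le_pos; auto. left; apply Rinv_0_lt_compat; auto. Qed.
Lemma mul_div_np X d : 0 < d -> X <= 0 -> X / d <= 0.
Proof. intros. unfold Rdiv. assert (0 < / d) by (apply Rinv_0_lt_compat; auto). nra. Qed.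

Lemma Cond_P t s : 0 < t < 1 -> 1 <= s^2 -> 0 <= cP t s -> Cond t s (sP t s).
Proof.
  intros ht H1 H2.
  assert (Dp : 0 < s^2 - 2*t*s + 1) by (pose proof (pow2_ge_0 (s-t)); nra).
  assert (Hts : t - s <> 0) by (intro; assert (s = t) by lra; subst; nra).
  assert (Hd : 0 < (t-s)^2) by (apply pow2_gt_0 ; auto).
  assert (E0 : LP t s (sP t s) = 0) by (unfold LP, sP; field; auto).
  unfold Cond. split; [|split; [|split; [|split]]].
  - intro E. assert (E' : sP t s - s = (s^2 - 2*t*s+1)/(t-s)) by (unfold sP; field; auto).
    rewrite E, Rminus_diag in E'. 
    assert (s^2 - 2*t*s+1 = 0) by (replace (s^2 - 2*t*s+1) with ((s^2 - 2*t*s+1)/(t-s)*(t-s)) by (field; auto); rewrite <- E'; ring). lra.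
  - rewrite E0; lra.
  - assert (E2 : (sP t s - s) * LQ t s (sP t s)
         = -2*t*(s^2 - 2*t*s + 1)*(1-s^2)/(t-s)^2) by (unfold sP, LQ; field; auto).
    rewrite E2. apply mul_div_nn; auto.
    assert (0 < t*(s^2 - 2*t*s + 1)) by (apply Rmult_lt_0_compat; lra). nra.
  - assert (E2 : (sP t s - s) * LR t s (sP t s)
         = -(s^2 - 2*t*s + 1)*cP t s/(t-s)^2) by (unfold sP, LR, cP; field; auto).
    rewrite E2. apply mul_div_np; auto. nra.
  - left; auto.
Qed.

Lemma Cond_Q t s : 0 < t < 1 -> s <> -t -> s^2 <= 1 -> cB t s <= 0 -> Cond t s (sQ t s).
Proof.
  intros ht Hst H1 H2.
  assert (Dq : 0 < s^2 + 2*t*s + 1) by (pose proof (pow2_ge_0 (s+t)); nra).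
  assert (Hts : s + t <> 0) by (intro; apply Hst; lra).
  assert (Hd : 0 < (s+t)^2) by (apply pow2_gt_0 ; auto).
  assert (E0 : LQ t s (sQ t s) = 0) by (unfold LQ, sQ; field; auto).
  unfold Cond. split; [|split; [|split; [|split]]].
  - intro E. assert (E' : sQ t s - s = -(s^2 + 2*t*s+1)/(s+t)) by (unfold sQ; field; auto).
    rewrite E, Rminus_diag in E'. 
    assert (-(s^2 + 2*t*s+1) = 0) by (replace (-(s^2 + 2*t*s+1)) with (-(s^2 + 2*t*s+1)/(s+t)*(s+t)) by (field; auto); rewrite <- E'; ring). lra.
  - assert (E2 : (sQ t s - s) * LP t s (sQ t s)
         = 2*t*(s^2 + 2*t*s + 1)*(1-s^2)/(s+t)^2) by (unfold sQ, LP; field; auto).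
    rewrite E2. apply mul_div_nn; auto.
    assert (0 < t*(s^2 + 2*t*s + 1)) by (apply Rmult_lt_0_compat; lra). nra.
  - rewrite E0; lra.
  - assert (E2 : (sQ t s - s) * LR t s (sQ t s)
         = (s^2 + 2*t*s + 1)*cB t s/(s+t)^2) by (unfold sQ, LR, cB; field; auto).
    rewrite E2. apply mul_div_np; auto. nra.
  - right; left; auto.
Qed.

Lemma Cond_R t s : 0 < t < 1 -> cP t s <= 0 -> 0 <= cB t s -> Cond t s (sR t s).
Proof.
  intros ht H1 H2.
  assert (Dr : 0 < s^2 + t) by (pose proof (pow2_ge_0 s); nra).
  assert (Hts : s <> 0) by (intro; subst; unfold cB in H2; nra).
  assert (Hd : 0 < s^2) by (apply pow2_gt_0 ; auto).
  assert (E0 : LR t s (sR t s) = 0) by (unfold LR, sR; field; auto).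
  unfold Cond. split; [|split; [|split; [|split]]].
  - intro E. assert (E' : sR t s - s = -(s^2 + t)/s) by (unfold sR; field; auto).
    rewrite E, Rminus_diag in E'. 
    assert (-(s^2 + t) = 0) by (replace (-(s^2 + t)) with (-(s^2 + t)/s*s) by (field; auto); rewrite <- E'; ring). lra.
  - assert (E2 : (sR t s - s) * LP t s (sR t s)
         = -(s^2+t)*cP t s/s^2) by (unfold sR, LP, cP; field; auto).
    rewrite E2. apply mul_div_nn; auto. nra.
  - assert (E2 : (sR t s - s) * LQ t s (sR t s)
         = (s^2+t)*cB t s/s^2) by (unfold sR, LQ, cB; field; auto).
    rewrite E2. apply mul_div_nn; auto. nra.
  - rewrite E0; lra.
  - right; right; auto.
Qed.

Lemma lt_div a N D : 0 < D -> a * D < N -> a < N / D.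
Proof. intros HD H. replace a with (a*D/D) by (field; lra).
  unfold Rdiv. apply Rmult_lt_compat_r; auto. apply Rinv_0_lt_compat; auto. Qed.
Lemma div_lt a N D : 0 < D -> N < a * D -> N / D < a.
Proof. intros HD H. replace a with (a*D/D) by (field; lra).
  unfold Rdiv. apply Rmult_lt_compat_r; auto. apply Rinv_0_lt_compat; auto. Qed.
Lemma lt_divn a N D : D < 0 -> N < a * D -> a < N / D.
Proof. intros HD H. replace (N/D) with ((-N)/(-D)) by (field; lra). apply lt_div; lra. Qed.
Lemma div_ltn a N D : D < 0 -> a * D < N -> N / D < a.
Proof. intros HD H. replace (N/D) with ((-N)/(-D)) by (field; lra). apply div_lt; lra. Qed.

Lemma psi_step t s : 0 < t < 1 -> s <> -t -> (exists s', Cond t s s') ->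
  exists s', psi (Ut t) (pv s) = pv s' /\
  ((s' = sP t s /\ 1 <= s^2 /\ 0 <= cP t s) \/
  (s' = sQ t s /\ s^2 <= 1 /\ cB t s <= 0) \/
  (s' = sR t s /\ cP t s <= 0 /\ 0 <= cB t s)).
Proof.
  intros ht hs Hex. destruct (psi_pv t s (proj1 ht) hs Hex) as [s' [E C]].
  exists s'. split; auto. apply Cond_cases; auto.
Qed.

Section S.
Variable t : R.
Hypothesis ht : 0.8 < t < 1.
Let ht' : 0 < t < 1. Proof. lra. Qed.

Lemma step5 s : s < -1 -> psi (Ut t) (pv s) = pv (sP t s) /\ t < sP t s < 1.
Proof.
  intro hs.
  assert (HcP : 0 < cP t s).
  { unfold cP. assert (0 < t*(s^2-1)) by (apply Rmult_lt_0_compat; nra).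
    assert (0 < (t-1)*s) by nra. nra. }
  destruct (psi_step t s ht') as [s' [E C]]; [lra| |].
  { exists (sP t s). apply Cond_P; auto; nra. }
  assert (Hts : 0 < t - s) by lra.
  destruct C as [[-> _]|[[_ [C _]]|[_ [C _]]]]; try (exfalso; nra).
  split; auto. unfold sP. split.
  - apply lt_div; nra.
  - apply div_lt; nra.
Qed.

Lemma step2 s : t < s < 1 -> psi (Ut t) (pv s) = pv (sR t s) /\ -1 < sR t s < -t.
Proof.
  intro hs.
  assert (HcB : 0 < cB t s).
  { unfold cB. assert (0 < t*(s^2-t^2)) by (apply Rmult_lt_0_compat; nra).
    assert (0 < (1-t)*s) by nra. nra. }
  assert (HcP : cP t s < 0).
  { unfold cP. assert (0 < (s - t)*(1-s)) by nra. nra. }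
  destruct (psi_step t s ht') as [s' [E C]]; [lra| |].
  { exists (sR t s). apply Cond_R; auto; lra. }
  destruct C as [[_ [C _]]|[[_ [_ C]]|[-> _]]]; try (exfalso; nra).
  split; auto. unfold sR. split.
  - apply lt_div; nra.
  - apply div_lt; nra.
Qed.

Lemma step4 s : -1 < s < -t -> psi (Ut t) (pv s) = pv (sQ t s) /\ 1 < sQ t s.
Proof.
  intro hs.
  assert (HcB : cB t s < 0).
  { unfold cB. assert (0 < (-t - s)*(s+1)) by nra. nra. }
  destruct (psi_step t s ht') as [s' [E C]]; [lra| |].
  { exists (sQ t s). apply Cond_Q; auto; try lra; nra. }
  destruct C as [[_ [C _]]|[[-> _]|[_ [_ C]]]]; try (exfalso; nra).
  split; auto. unfold sQ.
  apply lt_divn; nra.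
Qed.

Lemma step1 s : 1 < s -> exists s', psi (Ut t) (pv s) = pv s' /\ -t < s' < t /\
   ((s' = sP t s /\ 0 <= cP t s) \/ (s' = sR t s /\ cP t s <= 0)).
Proof.
  intro hs.
  assert (HcB : 0 < cB t s).
  { unfold cB. assert (0 < t*(s^2-1)) by (apply Rmult_lt_0_compat; nra).
    assert (0 < (1-t)*s) by nra. nra. }
  destruct (psi_step t s ht') as [s' [E C]]; [lra| |].
  { destruct (Rle_or_lt 0 (cP t s)).
    - exists (sP t s). apply Cond_P; auto; nra.
    - exists (sR t s). apply Cond_R; auto; lra. }
  exists s'. split; auto.
  destruct C as [[-> [_ C]]|[[_ [C _]]|[-> [C _]]]]; try (exfalso; nra).
  - split; [|left; auto]. unfold sP.
    assert (Hm : 1 + t^2 < 2*t*s).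
    { unfold cP in C. assert (0 < 2*t + t - 1) by lra.
      destruct (Rlt_or_le (1+t^2) (2*t*s)); auto. exfalso.
      assert (Hu : t^4 - 2*t^3 + 2*t - 1 < 0).
      { replace (t^4 - 2*t^3 + 2*t - 1) with ((t-1)^3*(t+1)) by ring.
        assert (0 < (1-t)^3) by (apply pow_lt; lra). nra. }
      nra. }
    split.
    + apply lt_divn; nra.
    + apply div_ltn; nra.
  - split; [|right; auto]. unfold sR. split.
    + apply lt_div; nra.
    + apply div_lt; nra.
Qed.

Lemma step3 s : -t < s < t -> exists s', psi (Ut t) (pv s) = pv s' /\ s' < -1 /\
   ((s' = sR t s /\ 0 <= cB t s) \/ (s' = sQ t s /\ cB t s <= 0)).
Proof.
  intro hs.
  destruct (psi_step t s ht') as [s' [E C]]; [lra| |].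
  { destruct (Rle_or_lt 0 (cB t s)).
    - exists (sR t s). apply Cond_R; auto.
      assert (0 < s). { unfold cB in H. destruct (Rle_or_lt s 0); auto. nra. }
      unfold cP. nra.
    - exists (sQ t s). apply Cond_Q; auto; try lra; nra. }
  exists s'. split; auto.
  destruct C as [[-> [C _]]|[[-> [_ C]]|[-> [_ C]]]]; try (exfalso; nra).
  - split; [|right; auto]. unfold sQ.
    apply div_lt; nra.
  - split; [|left; auto]. unfold sR.
    assert (0 < s). { unfold cB in C. destruct (Rle_or_lt s 0); auto. nra. }
    apply div_lt; nra.
Qed.
End S.

Section A.
Variable t : R.
Hypothesis ht : 0.8 < t < 1.

Lemma Kform x : x < -1 -> sQ t (sR t (sP t x)) = (t*x - (1+t+t^2))/(t*(1+x)).
Proof.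
  intro hx. unfold sQ, sR, sP.
  assert (t - x <> 0) by lra. assert (1 - t*x <> 0) by nra.
  assert (1 + x <> 0) by lra.
  assert (E1 : - t / ((1 - t * x) / (t - x)) = -t*(t-x)/(1-t*x)) by (field; auto).
  rewrite E1.
  assert (E2 : - t * (t - x) / (1 - t * x) + t = t*(1-t)*(1+x)/(1-t*x)) by (field; auto).
  assert (E3 : 1 + t * (- t * (t - x) / (1 - t * x)) = (1-t)*(1+t+t^2 - t*x)/(1-t*x)) by (field; auto).
  rewrite E2, E3. field. repeat split; auto; lra.
Qed.

Lemma caseRR u0 u1 u2 : 1 < u0 -> u2 < -1 -> u1 = sR t u0 -> u2 = sR t u1 -> False.
Proof. intros h0 h2 E1 E2. unfold sR in *. subst.
  assert (u0 <> 0) by lra. assert (t <> 0) by lra.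
  assert (- t / (- t / u0) = u0) by (field; auto). lra. Qed.

Lemma caseRQ u0 u1 u2 : 1 < u0 -> u2 < -1 -> -t < u1 < t -> u1 = sR t u0 -> u2 = sQ t u1 ->
  u0 = (t*u2 - (1+t+t^2))/(t*(1+u2)) -> cP t u0 <= 0 -> False.
Proof.
  intros h0 h2 h1 E1 E2 E3 C.
  assert (Eu2 : u2 = -(u0 - t^2)/(t*(u0-1))).
  { rewrite E2, E1. unfold sQ, sR. field. repeat split; try lra. 
    intro. assert (u0 = 1) by nra. lra. }
  assert (H : u0*t*(1+u2) = t*u2 - (1+t+t^2)).
  { rewrite E3 at 1. field. split; lra. }
  assert (Hp : -(1-t)*u0^2 + (2 + 2*t^2)*u0 - (1+t+2*t^2) = 0).
  { assert (t*(u0-1) <> 0) by nra.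
    apply Rmult_eq_reg_l with t; [|lra].
    assert (EE : t * (- (1 - t) * u0 ^ 2 + (2 + 2 * t ^ 2) * u0 - (1 + t + 2 * t ^ 2))
      = (t*(u0-1)) * (u0*t*(1+(-(u0 - t^2)/(t*(u0-1)))) - (t*(-(u0 - t^2)/(t*(u0-1))) - (1+t+t^2)))).
    { field; repeat split; lra. }
    rewrite EE.
    rewrite <- Eu2, H. ring. }
  assert (Hf : (u0 - 1)*((1-t)*u0 - (1+t+2*t^2)) = 0) by nra.
  apply Rmult_integral in Hf. destruct Hf as [Hf|Hf]; [lra|].
  unfold cP in C. nra.
Qed.

Lemma casePR u0 u1 u2 : 1 < u0 -> u2 < -1 -> -t < u1 < t -> u1 = sP t u0 -> u2 = sR t u1 ->
  u0 = (t*u2 - (1+t+t^2))/(t*(1+u2)) -> 0 <= cB t u1 -> False.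
Proof.
  intros h0 h2 h1 E1 E2 E3 C.
  assert (Hd : 1 - t*u0 <> 0).
  { intro Z. assert (u1 = 0) by (rewrite E1; unfold sP; rewrite Z; field; lra).
    rewrite H in E2. unfold sR in E2. rewrite Rdiv_0_r in E2. lra. }
  assert (Eu2 : u2 = -t*(t-u0)/(1-t*u0)).
  { rewrite E2, E1. unfold sR, sP. field. repeat split; lra. }
  assert (H : u0*t*(1+u2) = t*u2 - (1+t+t^2)).
  { rewrite E3 at 1. field. split; lra. }
  assert (Hp : u0 * (2*t^2*(1+t)) = (1+t)*(1+t^2)).
  { assert (EE : u0 * (2*t^2*(1+t)) - (1+t)*(1+t^2)
      = -((1-t*u0) * (u0*t*(1+(-t*(t-u0)/(1-t*u0))) - (t*(-t*(t-u0)/(1-t*u0)) - (1+t+t^2))))).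
    { field; auto. }
    rewrite <- Eu2, H in EE. lra. }
  assert (Eu0 : u0 = (1+t^2)/(2*t^2)).
  { apply Rmult_eq_reg_r with (2*t^2*(1+t)); [|nra]. rewrite Hp. field. lra. }
  assert (Eu1 : u1 = t*(1-t)/(2*t^2+t+1)).
  { rewrite E1, Eu0. unfold sP. field. split; [nra|split; [lra|]].
    intro Z. nra. }
  assert (0 < u1 < 1 - t).
  { rewrite Eu1. split.
    - apply Rdiv_lt_0_compat; nra.
    - apply div_lt; nra. }
  unfold cB in C. nra.
Qed.
End A.

Definition qq t u := t*(1-t)^2*u^2 - 2*t*(1+t)^2*u + (1+t+4*t^2+t^3+t^4).

Lemma pL_neg e : 0 < e < 0.2 -> -32 + 128*e - 208*e^2 + 184*e^3 - 96*e^4 + 29*e^5 - 4*e^6 < 0.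
Proof. intros. nra. Qed.

Lemma pU_neg e : 0 < e < 0.2 ->
  -128 + 640*e - 1376*e^2 + 1696*e^3 - 1328*e^4 + 684*e^5 - 228*e^6 + 45*e^7 - 4*e^8 < 0.
Proof. intros. nra. Qed.

Lemma PQ_final t u : 0.8 < t < 1 -> 1 < u -> qq t u = 0 ->
  0 <= t*u^2 + (t-1)*u - t^2 ->
  t*(1-t)*u^2 - (3*t^2+1)*u + t*(2+t+t^2) <= 0 -> False.
Proof.
  intros ht hu Hq HP HQ.
  set (e := 1 - t).
  assert (he : 0 < e < 0.2) by (unfold e; lra).
  set (c := 1+t+4*t^2+t^3+t^4).
  set (DL := 2*t*(1+t)^2 - e^3). set (NL := c + t^2*e^2).
  set (DU := 2*t*(1+t)^2 - e*(3*t^2+1)). set (NU := c - e*t*(2+t+t^2)).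
  assert (hDL : 0 < DL) by (unfold DL; nra).
  assert (hDU : 0 < DU) by (unfold DU; nra).
  assert (H1 : DL*u - NL = e^2*(t*u^2 + (t-1)*u - t^2) - qq t u) by (unfold DL, NL, qq, c, e; ring).
  assert (H2 : DU*u - NU = e*(t*(1-t)*u^2 - (3*t^2+1)*u + t*(2+t+t^2)) - qq t u) by (unfold DU, NU, qq, c, e; ring).
  assert (hL : NL/DL <= u).
  { assert (0 <= DL*u - NL) by (rewrite H1, Hq; nra).
    apply Rmult_le_reg_r with DL; auto. replace (NL/DL*DL) with NL by (field; lra). lra. }
  assert (hU : u <= NU/DU).
  { assert (DU*u - NU <= 0) by (rewrite H2, Hq; nra).
    apply Rmult_le_reg_r with DU; auto. replace (NU/DU*DU) with NU by (field; lra). lra. }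
  set (L := NL/DL) in *. set (U := NU/DU) in *.
  assert (qL : qq t L < 0).
  { assert (E : qq t L = e^5 * (-32 + 128*e - 208*e^2 + 184*e^3 - 96*e^4 + 29*e^5 - 4*e^6) / DL^2).
    { unfold L, qq. unfold NL, DL, c. field_simplify_eq. unfold e. ring. unfold DL in hDL. lra. }
    rewrite E. pose proof (pL_neg e he). 
    assert (0 < e^5) by (apply pow_lt; lra). assert (0 < DL^2) by (apply pow_lt; lra).
    apply div_lt; nra. }
  assert (qU : qq t U < 0).
  { assert (E : qq t U = e^3 * (-128 + 640*e - 1376*e^2 + 1696*e^3 - 1328*e^4 + 684*e^5 - 228*e^6 + 45*e^7 - 4*e^8) / DU^2).
    { unfold U, qq. unfold NU, DU, c. field_simplify_eq. unfold e. ring. unfold DU in hDU. lra. }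
    rewrite E. pose proof (pU_neg e he). 
    assert (0 < e^3) by (apply pow_lt; lra). assert (0 < DU^2) by (apply pow_lt; lra).
    apply div_lt; nra. }
  assert (Id : (U-L)*qq t u = (U-u)*qq t L + (u-L)*qq t U - t*(1-t)^2*(U-L)*(u-L)*(U-u))
    by (unfold qq; ring).
  rewrite Hq in Id.
  assert (hu' : u < U) by (destruct (Rle_lt_or_eq _ _ hU) as [h|h]; auto; rewrite <- h in qU; lra).
  assert (0 < t*(1-t)^2) by (apply Rmult_lt_0_compat; [lra| apply pow_lt; lra]).
  assert (0 <= (U-L)*(u-L)*(U-u)) by (apply Rmult_le_pos; [apply Rmult_le_pos|]; lra).
  assert ((U-u)*qq t L < 0) by nra.
  assert ((u-L)*qq t U <= 0) by nra.
  nra.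
Qed.

Lemma casePQ t u0 u1 u2 : 0.8 < t < 1 -> 1 < u0 -> u2 < -1 -> -t < u1 < t -> u1 = sP t u0 -> u2 = sQ t u1 ->
  u0 = (t*u2 - (1+t+t^2))/(t*(1+u2)) -> 0 <= cP t u0 -> cB t u1 <= 0 -> False.
Proof.
  intros ht h0 h2 h1 E1 E2 E3 C1 C2.
  assert (Htu : t - u0 <> 0) by lra.
  assert (Ed : u1 + t = (1 + t^2 - 2*t*u0)/(t-u0)) by (rewrite E1; unfold sP; field; auto).
  assert (HD2 : 1 + t^2 - 2*t*u0 <> 0).
  { intro Z. rewrite Z in Ed. rewrite Rdiv_0_l in Ed. lra. }
  assert (Eu2 : u2 = (u0*(1+t^2) - 2*t)/(1 + t^2 - 2*t*u0)).
  { rewrite E2, E1. unfold sQ, sP. field. split; auto.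
    }
  assert (H : u0*t*(1+u2) = t*u2 - (1+t+t^2)).
  { rewrite E3 at 1. field. split; lra. }
  assert (Hq : qq t u0 = 0).
  { assert (EE : qq t u0 = (1 + t^2 - 2*t*u0) * (u0*t*(1+(u0*(1+t^2) - 2*t)/(1 + t^2 - 2*t*u0))
        - (t*((u0*(1+t^2) - 2*t)/(1 + t^2 - 2*t*u0)) - (1+t+t^2)))).
    { unfold qq. field. auto. }
    rewrite EE, <- Eu2, H. ring. }
  assert (HQ : t*(1-t)*u0^2 - (3*t^2+1)*u0 + t*(2+t+t^2) <= 0).
  { assert (EE : cB t u1 * (t-u0)^2 = (1-t)*(t*(1-t)*u0^2 - (3*t^2+1)*u0 + t*(2+t+t^2))).
    { rewrite E1. unfold cB, sP. field. auto. }
    assert (0 < (t-u0)^2) by (apply pow2_gt_0; auto).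
    assert (cB t u1 * (t-u0)^2 <= 0) by nra. nra. }
  apply (PQ_final t u0); auto.
Qed.

Lemma iter_shift (f : pt -> pt) v : Nat.iter 5 f v = v -> Nat.iter 5 f (f v) = f v.
Proof. intro H. rewrite Nat.iter_swap, H. reflexivity. Qed.

Lemma no_fix t u0 : 0.8 < t < 1 -> 1 < u0 -> Nat.iter 5 (psi (Ut t)) (pv u0) = pv u0 -> False.
Proof.
  intros ht h0 H.
  destruct (step1 t ht u0 h0) as [u1 [E1 [R1 C1]]].
  destruct (step3 t ht u1 R1) as [u2 [E2 [R2 C2]]].
  destruct (step5 t ht u2 R2) as [E3 R3].
  destruct (step2 t ht (sP t u2) R3) as [E4 R4].
  destruct (step4 t ht (sR t (sP t u2)) R4) as [E5 R5].
  rewrite !Nat.iter_succ in H. change (Nat.iter 0 (psi (Ut t)) (pv u0)) with (pv u0) in H.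
  rewrite E1, E2, E3, E4, E5 in H. apply pv_inj in H.
  rewrite Kform in H by lra. symmetry in H.
  destruct C1 as [[Eu1 Cu1]|[Eu1 Cu1]]; destruct C2 as [[Eu2 Cu2]|[Eu2 Cu2]].
  - exact (casePR t ht u0 u1 u2 h0 R2 R1 Eu1 Eu2 H Cu2).
  - exact (casePQ t u0 u1 u2 ht h0 R2 R1 Eu1 Eu2 H Cu1 Cu2).
  - exact (caseRR t ht u0 u1 u2 h0 R2 Eu1 Eu2).
  - exact (caseRQ t ht u0 u1 u2 h0 R2 R1 Eu1 Eu2 H Cu1).
Qed.

Theorem lemma6p13 (t : R) (ht : 0.8 < t < 1) (v : pt) (hv : on_S1 v) :
  let P : pt := (0, t) in
  let Q : pt := (0, - t) in
  let R0 : pt := ((t - 1) / (t + 1), 0) in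
  let A1 : pt := (1, 0) in
  let A2 : pt := ((t ^ 2 - 1) / (t ^ 2 + 1), 2 * t / (t ^ 2 + 1)) in
  let A3 : pt := (0, -1) in
  let A4 : pt := (0, 1) in
  let A5 : pt := ((t ^ 2 - 1) / (t ^ 2 + 1), - (2 * t / (t ^ 2 + 1))) in
  @Nat.iter 5 pt (psi (filled_triangle P Q R0)) v = v ->
  v = A1 \/ v = A2 \/ v = A3 \/ v = A4 \/ v = A5.
Proof.
  intros P Q R0 A1 A2 A3 A4 A5 H.
  change (psi (filled_triangle P Q R0)) with (psi (Ut t)) in H.
  destruct (Req_dec (fst v) 1) as [Ex|Ex].
  { left. destruct v as [x y]. simpl in Ex. subst x. unfold on_S1 in hv; simpl in hv.
    assert (y = 0) by nra. subst. reflexivity. }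
  pose proof (S1_pv v hv Ex) as Ev. set (s := snd v / (1 - fst v)) in Ev.
  clearbody s. subst v.
  destruct (Rtotal_order s 1) as [h1|[h1|h1]].
  2:{ right; right; right; left. subst s. unfold pv, A4. f_equal; field. }
  2:{ exfalso. exact (no_fix t s ht h1 H). }
  destruct (Rtotal_order s t) as [h2|[h2|h2]].
  2:{ right; left. subst s. reflexivity. }
  2:{ exfalso. destruct (step2 t ht s (conj h2 h1)) as [E4 R4].
      destruct (step4 t ht _ R4) as [E5 R5].
      apply (no_fix t _ ht R5). rewrite <- E5, <- E4. do 2 apply iter_shift. auto. }
  destruct (Rtotal_order s (-t)) as [h3|[h3|h3]].
  2:{ right; right; right; right. subst s. unfold pv, A5. f_equal; field; repeat split; apply pos1'. }
  2:{ exfalso. destruct (step3 t ht s (conj h3 h2)) as [u2 [E2 [R2 _]]].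
      destruct (step5 t ht u2 R2) as [E3 R3].
      destruct (step2 t ht _ R3) as [E4 R4].
      destruct (step4 t ht _ R4) as [E5 R5].
      apply (no_fix t _ ht R5). rewrite <- E5, <- E4, <- E3, <- E2. do 4 apply iter_shift. auto. }
  destruct (Rtotal_order s (-1)) as [h4|[h4|h4]].
  - exfalso. destruct (step5 t ht s h4) as [E3 R3].
      destruct (step2 t ht _ R3) as [E4 R4].
      destruct (step4 t ht _ R4) as [E5 R5].
      apply (no_fix t _ ht R5). rewrite <- E5, <- E4, <- E3. do 3 apply iter_shift. auto.
  - right; right; left. subst s. unfold pv, A3. f_equal; field.
  - exfalso. destruct (step4 t ht s (conj h4 h3)) as [E5 R5].
      apply (no_fix t _ ht R5). rewrite <- E5. apply iter_shift. auto.
Qed.
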